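(* Assume the setup of the context with $F$ formally real, and fix a $\ast$-symmetric basis $B$ of $H$. Let $\rho:H\to K^{d\times d}$ be an irreducible matrix representation of isomorphism type $\lambda\in\Lambda$. (a) Suppose there is $\Omega\in\mathcal{O}^{d\times d}$ with $\Omega\rho(x)=\rho(x^\ast)^T\Omega$ for all $x\in B$ such that $\Omega+\mathfrak{m}^{d\times d}$ is an invertible diagonal matrix $\mathrm{diag}(d_1,\dots,d_d)\in GL_d(F)$. Then $a_\lambda\in\Gamma$ and $\rho$ is balanced; moreover, for any $v^{a_\lambda}\in K$ with $\nu(v^{a_\lambda})=a_\lambda$, the matrices $c(x):=v^{a_\lambda}\rho(x)\bmod\mathfrak{m}\in F^{d\times d}$ satisfy $d_{\mathfrak t}\,c(x^\ast)_{\mathfrak{ts}}=d_{\mathfrak s}\,c(x)_{\mathfrak{st}}$ for all $x\in B$ and all $\mathfrak s,\mathfrak t$. (b) Suppose there is a symmetric $\Omega\in GL_d(\mathcal{O})$ with $\Omega\rho(x)=\rho(x^\ast)^T\Omega$ for all $x\in B$. Then $a_\lambda\in\Gamma$ and $\rho$ is balanced.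
   Context: Setup: $\Gamma$ a totally ordered abelian group; $K$ a field with surjective valuation $\nu:K\to\Gamma\cup\{\infty\}$, valuation ring $\mathcal{O}$, maximal ideal $\mathfrak{m}$, residue field $F=\mathcal{O}/\mathfrak{m}$; $\nu$ of a matrix is the minimum of the valuations of its entries. $F$ formally real means $-1$ is not a sum of squares in $F$. $H$ is a finite-dimensional split semisimple $K$-algebra which is symmetric with respect to a $K$-linear trace form $\tau:H\to K$ ($\tau(ab)=\tau(ba)$, $(a,b)\mapsto\tau(ab)$ nondegenerate). $\Lambda$ indexes the simple $H$-modules, $\chi_\lambda$ is the character of type $\lambda$, and the Schur elements $c_\lambda\in K^\times$ are defined by $\tau=\sum_{\lambda\in\Lambda}c_\lambda^{-1}\chi_\lambda$. $\ast:H\to H$ is a $K$-linear antiautomorphism with $h^{\ast\ast}=h$. A $\ast$-symmetric basis is a $K$-basis $B$ of $H$ with $B^\ast=B$ and $\tau(bc^\ast)=\delta_{bc}$ for all $b,c\in B$; one is assumed to exist. Put $a_\lambda:=-\tfrac12\nu(c_\lambda)\in\tfrac12\Gamma$. An irreducible matrix representation $\rho:H\to K^{d\times d}$ of type $\lambda$ is called balanced if $a_\lambda\in\Gamma$ and $\nu(\rho(b))\ge-a_\lambda$ for all $b\in B'$, for every $\ast$-symmetric basis $B'$ of $H$. *)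

(* Defs.v *)
From HB Require Import structures.
From mathcomp Require Import all_boot all_order all_algebra all_field.
Set Implicit Arguments. Unset Strict Implicit. Unset Printing Implicit Defensive.
Import Order.TTheory GRing.Theory Num.Theory.
Local Open Scope ring_scope.

Definition totally_ordered_group (G : porderZmodType) :=
  (forall x y : G, (x <= y) || (y <= x)) /\
  (forall x y z : G, x <= y -> x + z <= y + z).

(* A valuation nu : K -> Gamma u {oo} is encoded by v : K -> Gamma, the value of
   nu on nonzero elements (nu 0 = oo; the value v 0 is irrelevant). *)
Definition surj_valuation (K : fieldType) (G : porderZmodType) (v : K -> G) :=
  [/\ forall x y : K, x != 0 -> y != 0 -> v (x * y) = v x + v y,
      forall x y : K, x != 0 -> y != 0 -> x + y != 0 ->
        (v x <= v (x + y)) || (v y <= v (x + y))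
    & forall g : G, exists2 x : K, x != 0 & v x = g].

Section Val.
Variables (K : fieldType) (G : porderZmodType) (v : K -> G).
Definition vge (x : K) (g : G) : bool := (x == 0) || (g <= v x).
Definition inO (x : K) : bool := vge x 0.
Definition inm (x : K) : bool := (x == 0) || (0 < v x).
Definition inOunit (x : K) : bool := (x != 0) && (v x == 0).
Definition vge_mx m n (M : 'M[K]_(m, n)) (g : G) : Prop :=
  forall i j, vge (M i j) g.
(* residue field F = O/m is formally real: -1 is not a sum of squares in F,
   i.e. for no x_1..x_k in O is 1 + sum x_i^2 in m. *)
Definition residue_formally_real : Prop :=
  forall k (x : 'I_k -> K), (forall i, inO (x i)) ->
    ~~ inm (1 + \sum_(i < k) x i ^+ 2).
End Val.

Section Alg.
Variables (K : fieldType) (H : falgType K).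

Definition symm_trace_form (tau : H -> K) :=
  [/\ forall (a : K) (x y : H), tau (a *: x + y) = a * tau x + tau y,
      forall x y : H, tau (x * y) = tau (y * x)
    & forall x : H, (forall y : H, tau (x * y) = 0) -> x = 0].

Definition involutive_antiaut (star : H -> H) :=
  [/\ forall (a : K) (x y : H), star (a *: x + y) = a *: star x + star y,
      forall x y : H, star (x * y) = star y * star x
    & forall x : H, star (star x) = x].

Definition star_sym_basis (tau : H -> K) (star : H -> H) (B : seq H) :=
  [/\ basis_of fullv B,
      forall b : H, (star b \in B) = (b \in B)
    & forall b c, b \in B -> c \in B -> tau (b * star c) = (b == c)%:R].

Definition mx_rep d (rho : H -> 'M[K]_d) :=
  [/\ forall (a : K) (x y : H), rho (a *: x + y) = a *: rho x + rho y,
      forall x y : H, rho (x * y) = rho x *m rho y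
    & rho 1 = 1%:M].

(* H is split semisimple, with simple modules indexed by L: the representations
   r l : H -> K^{n l x n l} induce an isomorphism H ~= prod_l M_{n l}(K). *)
Definition split_semisimple (L : finType) (n : L -> nat)
    (r : forall l : L, H -> 'M[K]_(n l)) :=
  [/\ forall l, (0 < n l)%N,
      forall l, mx_rep (r l),
      forall x : H, (forall l, r l x = 0) -> x = 0
    & forall M : (forall l : L, 'M[K]_(n l)), exists x : H, forall l, r l x = M l].

Definition chi (L : finType) (n : L -> nat) (r : forall l : L, H -> 'M[K]_(n l))
  (l : L) (x : H) : K := \tr (r l x).

Definition schur_elements (L : finType) (n : L -> nat)
    (r : forall l : L, H -> 'M[K]_(n l)) (tau : H -> K) (c : L -> K) :=
  (forall l, c l != 0) /\
  (forall x : H, tau x = \sum_(l : L) (c l)^-1 * chi r l x).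

(* rho is an irreducible matrix representation of type l: it is a matrix
   representation isomorphic (by an invertible change of basis) to r l. *)
Definition irr_rep_of_type (L : finType) (n : L -> nat)
    (r : forall l : L, H -> 'M[K]_(n l)) (l : L) d (rho : H -> 'M[K]_d) :=
  mx_rep rho /\
  exists P : 'M[K]_(d, n l), exists Q : 'M[K]_(n l, d),
    [/\ P *m Q = 1%:M, Q *m P = 1%:M & forall x : H, rho x = P *m r l x *m Q].

(* rho (of type with Schur element cl) is balanced: a := -1/2 nu(cl) lies in
   Gamma (i.e. nu(cl) = -2a) and nu(rho b) >= -a for all b in every
   *-symmetric basis. *)
Definition balanced (G : porderZmodType) (v : K -> G) (tau : H -> K)
    (star : H -> H) (cl : K) d (rho : H -> 'M[K]_d) :=
  exists a : G, v cl = - (a *+ 2) /\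
    forall B' : seq H, star_sym_basis tau star B' ->
      forall b, b \in B' -> vge_mx v (rho b) (- a).
End Alg.

(* Main.v *)
Require Import Defs.
From HB Require Import structures.
From mathcomp Require Import all_boot all_order all_algebra all_field.
From mathcomp Require Import ring.
Import Order.TTheory GRing.Theory Num.Theory.
Local Open Scope ring_scope.

Set Implicit Arguments. Unset Strict Implicit. Unset Printing Implicit Defensive.


Section GroupOrder.
Variables (G : porderZmodType) (hG : totally_ordered_group G).

Lemma leD2r (x y z : G) : x <= y -> x + z <= y + z.
Proof. by case: hG => _ h; apply: h. Qed.
Lemma leD2 (x y z w : G) : x <= y -> z <= w -> x + z <= y + w.
Proof.
move=> h1 h2; apply: (le_trans (leD2r z h1)).
by rewrite ![y + _]addrC; apply: leD2r.
Qed.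
Lemma ltD2r (x y z : G) : x < y -> x + z < y + z.
Proof.
rewrite !lt_def => /andP[ne le]; rewrite leD2r // andbT.
by apply: contra ne => /eqP/addIr ->.
Qed.
Lemma ltleD (x y z w : G) : x < y -> z <= w -> x + z < y + w.
Proof.
move=> h1 h2; apply: (lt_le_trans (ltD2r z h1)).
by rewrite ![y + _]addrC; apply: leD2r.
Qed.
Lemma leN2 (x y : G) : x <= y -> - y <= - x.
Proof.
move=> h; have := leD2r (- x - y) h.
by rewrite addrA subrr add0r addrCA subrr addr0.
Qed.
Lemma le_total' (x y : G) : (x <= y) || (y <= x).
Proof. by case: hG. Qed.
Lemma gdouble0 (a : G) : a + a = 0 -> a = 0.
Proof.
move=> h; case/orP: (le_total' a 0) => ha.
  have := leD2r a ha; rewrite h add0r => h2; apply/eqP; rewrite eq_le ha h2 //.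
have := leD2r a ha; rewrite h add0r => h2; apply/eqP; rewrite eq_le ha h2 //.
Qed.
Lemma gdouble_inj (a b : G) : a + a = b + b -> a = b.
Proof.
move=> h; apply/eqP; rewrite -subr_eq0; apply/eqP; apply: gdouble0.
by rewrite addrACA h -opprD subrr.
Qed.
Lemma le_nlt (x y : G) : ~~ (y < x) -> x <= y.
Proof.
move=> h; case/orP: (le_total' x y) => // yx.
by move: h; rewrite lt_def yx andbT negbK => /eqP ->.
Qed.
End GroupOrder.


Section Valu.
Variables (K : fieldType) (G : porderZmodType) (v : K -> G).
Variables (hG : totally_ordered_group G) (hv : surj_valuation v).

Definition vgt (x : K) (g : G) : bool := (x == 0) || (g < v x).

Lemma vM (x y : K) : x != 0 -> y != 0 -> v (x * y) = v x + v y.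
Proof. by case: hv => h _ _; apply: h. Qed.
Lemma v1 : v 1 = 0.
Proof.
have := vM (oner_neq0 K) (oner_neq0 K); rewrite mulr1 => h.
by apply: (@addrI _ (v 1)); rewrite -h addr0.
Qed.
Lemma vV (x : K) : x != 0 -> v x^-1 = - v x.
Proof.
move=> x0; have := vM x0 (invr_neq0 x0); rewrite mulfV // v1 => h.
by apply: (@addrI _ (v x)); rewrite -h subrr.
Qed.
Lemma vN1 : v (-1) = 0.
Proof.
apply: (gdouble0 hG); rewrite -vM ?oppr_eq0 ?oner_neq0 //.
by rewrite mulrNN mulr1 v1.
Qed.
Lemma vN (x : K) : x != 0 -> v (- x) = v x.
Proof.
move=> x0; by rewrite -mulN1r vM ?oppr_eq0 ?oner_neq0 // vN1 add0r.
Qed.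

Lemma vge0 g : vge v 0 g. Proof. by rewrite /vge eqxx. Qed.
Lemma vgt0 g : vgt 0 g. Proof. by rewrite /vgt eqxx. Qed.

Lemma vgeD x y g : vge v x g -> vge v y g -> vge v (x + y) g.
Proof.
move=> hx hy; have [->|x0] := eqVneq x 0; first by rewrite add0r.
have [->|y0] := eqVneq y 0; first by rewrite addr0.
move: hx hy; rewrite /vge (negbTE x0) (negbTE y0) /= => hx hy.
case: (eqVneq (x + y) 0) => //= s0.
case: hv => _ h _; case/orP: (h _ _ x0 y0 s0) => h1.
  exact: le_trans hx h1.
exact: le_trans hy h1.
Qed.
Lemma vgeN x g : vge v x g -> vge v (- x) g.
Proof.
rewrite /vge oppr_eq0; have [//|x0] := eqVneq x 0; by rewrite /= vN.
Qed.
Lemma vgeB x y g : vge v x g -> vge v y g -> vge v (x - y) g.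
Proof. by move=> hx hy; apply: vgeD => //; apply: vgeN. Qed.
Lemma vgeM x y g h : vge v x g -> vge v y h -> vge v (x * y) (g + h).
Proof.
move=> hx hy; have [->|x0] := eqVneq x 0; first by rewrite mul0r /vge /vgt eqxx.
have [->|y0] := eqVneq y 0; first by rewrite mulr0 /vge /vgt eqxx.
move: hx hy; rewrite /vge /vgt (negbTE x0) (negbTE y0) /= => hx hy; by rewrite mulf_eq0 (negbTE x0) (negbTE y0) /= vM // leD2.
Qed.
Lemma vge_le x g h : vge v x g -> h <= g -> vge v x h.
Proof. by rewrite /vge => /orP[->//|hx] hg; rewrite (le_trans hg hx) orbT. Qed.
Lemma vge_sum (I : Type) (r : seq I) (P : pred I) (F : I -> K) g :
  (forall i, P i -> vge v (F i) g) -> vge v (\sum_(i <- r | P i) F i) g.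
Proof.
move=> h; elim/big_rec: _ => [|i x Pi hx]; first exact: vge0.
by apply: vgeD => //; apply: h.
Qed.

Lemma vgtD x y g : vgt x g -> vgt y g -> vgt (x + y) g.
Proof.
move=> hx hy; have [->|x0] := eqVneq x 0; first by rewrite add0r.
have [->|y0] := eqVneq y 0; first by rewrite addr0.
move: hx hy; rewrite /vgt (negbTE x0) (negbTE y0) /= => hx hy.
case: (eqVneq (x + y) 0) => //= s0.
case: hv => _ h _; case/orP: (h _ _ x0 y0 s0) => h1.
  exact: lt_le_trans hx h1.
exact: lt_le_trans hy h1.
Qed.
Lemma vgtN x g : vgt x g -> vgt (- x) g.
Proof.
rewrite /vgt oppr_eq0; have [//|x0] := eqVneq x 0; by rewrite /= vN.
Qed.
Lemma vgtB x y g : vgt x g -> vgt y g -> vgt (x - y) g.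
Proof. by move=> hx hy; apply: vgtD => //; apply: vgtN. Qed.
Lemma vgtM x y g h : vgt x g -> vge v y h -> vgt (x * y) (g + h).
Proof.
move=> hx hy; have [->|x0] := eqVneq x 0; first by rewrite mul0r /vge /vgt eqxx.
have [->|y0] := eqVneq y 0; first by rewrite mulr0 /vge /vgt eqxx.
move: hx hy; rewrite /vge /vgt (negbTE x0) (negbTE y0) /= => hx hy; by rewrite mulf_eq0 (negbTE x0) (negbTE y0) /= vM // ltleD.
Qed.
Lemma vgt_sum (I : Type) (r : seq I) (P : pred I) (F : I -> K) g :
  (forall i, P i -> vgt (F i) g) -> vgt (\sum_(i <- r | P i) F i) g.
Proof.
move=> h; elim/big_rec: _ => [|i x Pi hx]; first exact: vgt0.
by apply: vgtD => //; apply: h.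
Qed.
Lemma vgt_vge x g : vgt x g -> vge v x g.
Proof. by rewrite /vgt /vge => /orP[->//|/ltW ->]; rewrite orbT. Qed.
Lemma vge_val x : vge v x (v x).
Proof. by rewrite /vge lexx orbT. Qed.

Lemma unitO x : inO v x -> ~~ inm v x -> x != 0 /\ v x = 0.
Proof.
rewrite /inO /inm /vge; have [//|x0] := eqVneq x 0; rewrite /= => h1 h2; split => //.
by apply/eqP; rewrite eq_le h1 (le_nlt hG h2).
Qed.
Lemma notm_add x y : ~~ inm v x -> inm v y -> ~~ inm v (x + y).
Proof.
move=> hx hy; apply: contra hx => hs.
have -> : x = (x + y) - y by rewrite addrK.
exact: vgtB.
Qed.
Lemma inOunitV x : inOunit v x -> inO v x^-1.
Proof.
by case/andP => x0 /eqP vx; rewrite /inO /vge vV // vx oppr0 lexx orbT.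
Qed.
End Valu.


Lemma lin_sum (K : fieldType) (V W : lmodType K) (f : V -> W)
  (hf : forall a x y, f (a *: x + y) = a *: f x + f y)
  (I : Type) (r : seq I) (a : I -> K) (x : I -> V) :
  f (\sum_(i <- r) a i *: x i) = \sum_(i <- r) a i *: f (x i).
Proof.
have f0 : f 0 = 0.
  have := hf 1 0 0; rewrite scaler0 addr0 scale1r => h.
  by apply: (@addrI _ (f 0)); rewrite -h addr0.
elim: r => [|i r IH]; first by rewrite !big_nil.
by rewrite !big_cons hf IH.
Qed.

Lemma lin_sumK (K : fieldType) (V : lmodType K) (f : V -> K)
  (hf : forall a x y, f (a *: x + y) = a * f x + f y)
  (I : Type) (r : seq I) (a : I -> K) (x : I -> V) :
  f (\sum_(i <- r) a i *: x i) = \sum_(i <- r) a i * f (x i).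
Proof.
have f0 : f 0 = 0.
  have := hf 1 0 0; rewrite scaler0 addr0 mul1r => h.
  by apply: (@addrI _ (f 0)); rewrite -h addr0.
elim: r => [|i r IH]; first by rewrite !big_nil.
by rewrite !big_cons hf IH.
Qed.

Section Fam.
Variables (K : fieldType) (L : finType) (n : L -> nat).
Definition famsel (l0 : L) (A : 'M[K]_(n l0)) (l' : L) : 'M[K]_(n l') :=
  match l0 =P l' with
            | ReflectT e => eq_rect l0 (fun z => 'M[K]_(n z)) A l' e
            | ReflectF _ => 0 end.
Lemma famsel_eq (l0 : L) (A : 'M[K]_(n l0)) : @famsel l0 A l0 = A.
Proof. by rewrite /famsel; case: eqP => // e; rewrite (eq_axiomK e). Qed.
Lemma famsel_neq (l0 : L) (A : 'M[K]_(n l0)) (l' : L) : l' != l0 -> @famsel l0 A l' = 0.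
Proof. by move=> ne; rewrite /famsel; case: eqP => // e; rewrite e eqxx in ne. Qed.
End Fam.

Section Schur.
Variables (K : fieldType) (H : falgType K) (tau : H -> K) (htau : symm_trace_form tau)
  (star : H -> H) (hstar : involutive_antiaut star)
  (L : finType) (n : L -> nat) (r : forall l : L, H -> 'M[K]_(n l))
  (hr : split_semisimple r) (c : L -> K) (hc : schur_elements r tau c)
  (l : L) (d : nat) (rho : H -> 'M[K]_d) (hrho : irr_rep_of_type r l rho).

Lemma rho_sum (I : Type) (s : seq I) (a : I -> K) (x : I -> H) :
  rho (\sum_(i <- s) a i *: x i) = \sum_(i <- s) a i *: rho (x i).
Proof. by case: hrho => -[h _ _] _; apply: lin_sum. Qed.

Lemma star_sum (I : Type) (s : seq I) (a : I -> K) (x : I -> H) :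
  star (\sum_(i <- s) a i *: x i) = \sum_(i <- s) a i *: star (x i).
Proof. by case: hstar => h _ _; apply: lin_sum. Qed.

Lemma tau_sum (I : Type) (s : seq I) (a : I -> K) (x : I -> H) :
  tau (\sum_(i <- s) a i *: x i) = \sum_(i <- s) a i * tau (x i).
Proof. by case: htau => h _ _; apply: lin_sumK. Qed.

Lemma basis_expand (X : seq H) (hX : star_sym_basis tau star X) (x : H) :
  x = \sum_(i < size X) coord (in_tuple X) i x *: X`_i.
Proof.
case: hX => hb _ _; apply: (coord_span (X := in_tuple X)).
by rewrite (span_basis hb) memvf.
Qed.

Lemma coord_tau (X : seq H) (hX : star_sym_basis tau star X) (x : H) (j : 'I_(size X)) :
  coord (in_tuple X) j x = tau (x * star X`_j).
Proof.
have uX : uniq X by case: hX => hb _ _; apply: free_uniq (basis_free hb).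
rewrite {2}(basis_expand hX x) mulr_suml.
under eq_bigr => i _ do rewrite -scalerAl.
rewrite tau_sum (bigD1 j) //= big1 ?addr0.
  case: hX => _ _ h; rewrite h ?mem_nth // eqxx mulr1 //.
move=> i ij; case: hX => _ _ h; rewrite h ?mem_nth //.
rewrite nth_uniq //; have -> : (i == j :> nat) = false by exact: negbTE ij.
by rewrite mulr0.
Qed.

Lemma schur (X : seq H) (hX : star_sym_basis tau star X) (M : 'M[K]_d) :
  c l *: M = \sum_(i < size X) \tr (M *m rho (star X`_i)) *: rho X`_i.
Proof.
case: hrho => hrep [P [Q [PQ QP hPQ]]].
case: hr => _ hreps _ hsurj.
have [E hE] := hsurj (@famsel K L n l (Q *m M *m P)).
have rE : r l E = Q *m M *m P by rewrite hE famsel_eq.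
have rE' : forall l', l' != l -> r l' E = 0 by move=> l' ne; rewrite hE famsel_neq.
have rhoE : rho E = M by rewrite hPQ rE !mulmxA PQ mul1mx -!mulmxA PQ mulmx1.
have tauE : forall y, tau (E * y) = (c l)^-1 * \tr (M *m rho y).
  move=> y; case: hc => _ ->; rewrite (bigD1 l) //= big1 ?addr0.
    rewrite /chi; case: (hreps l) => _ -> _; rewrite rE hPQ.
    by rewrite -!mulmxA mxtrace_mulC -!mulmxA.
  move=> l' ne; rewrite /chi; case: (hreps l') => _ -> _.
  by rewrite rE' // mul0mx linear0 mulr0.
have cl0 : c l != 0 by case: hc.
rewrite -{1}rhoE {1}(basis_expand hX E) rho_sum scaler_sumr.
apply: eq_bigr => i _; rewrite coord_tau // tauE scalerA mulrA mulfV // mul1r.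
reflexivity.
Qed.
End Schur.


Section MxVal.
Variables (K : fieldType) (G : porderZmodType) (v : K -> G).
Variables (hG : totally_ordered_group G) (hv : surj_valuation v).

Lemma vge1 : vge v 1 0.
Proof. by rewrite /vge v1 // lexx orbT. Qed.
Lemma vge_sign k : vge v ((-1) ^+ k) 0.
Proof.
elim: k => [|k IH]; first exact: vge1.
rewrite exprS -(add0r 0); apply: vgeM => //.
by rewrite /vge vN1 // lexx orbT.
Qed.
Lemma vge_prod (I : Type) (r : seq I) (F : I -> K) :
  (forall i, vge v (F i) 0) -> vge v (\prod_(i <- r) F i) 0.
Proof.
move=> h; elim/big_rec: _ => [|i x _ hx]; first exact: vge1.
by rewrite -(add0r 0); apply: vgeM.
Qed.
Lemma det_inO m (A : 'M[K]_m) : (forall i j, vge v (A i j) 0) -> vge v (\det A) 0.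
Proof.
move=> h; apply: vge_sum => // s _; rewrite -(add0r 0); apply: vgeM => //.
  exact: vge_sign.
by apply: vge_prod => i; apply: h.
Qed.
Lemma adj_inO m (A : 'M[K]_m) : (forall i j, vge v (A i j) 0) ->
  forall i j, vge v (\adj A i j) 0.
Proof.
move=> h i j; rewrite /adjugate mxE /cofactor -(add0r 0); apply: vgeM => //.
  exact: vge_sign.
by apply: det_inO => a b; rewrite !mxE.
Qed.
Lemma inv_inO m (A : 'M[K]_m) : (forall i j, vge v (A i j) 0) ->
  inOunit v (\det A) -> forall i j, vge v (invmx A i j) 0.
Proof.
move=> h hu i j; rewrite /invmx unitmxE unitfE; case/andP: (hu) => -> _ /=.
rewrite mxE -(add0r 0); apply: vgeM => //; first exact: inOunitV.
exact: adj_inO.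
Qed.

Lemma tr_delta_mul d (p q : 'I_d) (A : 'M[K]_d) : \tr (delta_mx p q *m A) = A q p.
Proof.
rewrite /mxtrace (bigD1 p) //= big1 ?addr0 => [|k kp].
  rewrite mxE (bigD1 q) //= big1 ?addr0 => [|j jq]; first by rewrite mxE !eqxx mul1r.
  by rewrite mxE (negbTE jq) andbF mul0r.
by rewrite mxE big1 // => j _; rewrite mxE (negbTE kp) mul0r.
Qed.
Lemma delta_entry d (p q : 'I_d) (A B : 'M[K]_d) i j :
  (A *m delta_mx p q *m B) i j = A i p * B q j.
Proof.
rewrite mxE (bigD1 q) //= big1 ?addr0 => [|k kq].
  rewrite mxE (bigD1 p) //= big1 ?addr0 => [|k kp]; first by rewrite mxE !eqxx mulr1.
  by rewrite mxE (negbTE kp) mulr0.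
rewrite mxE big1 ?mul0r // => k' _; by rewrite mxE (negbTE kq) andbF mulr0.
Qed.

Lemma exists_min (T : finType) (P : pred T) (f : T -> G) :
  (exists x, P x) -> exists x, P x /\ forall y, P y -> f x <= f y.
Proof.
suff: forall s : seq T, (exists x, (x \in s) && P x) ->
    exists x, P x /\ forall y, y \in s -> P y -> f x <= f y.
  move=> h [x Px]; have [|z [Pz hz]] := h (enum T).
    by exists x; rewrite mem_enum Px.
  by exists z; split => // y Py; apply: hz; rewrite ?mem_enum.
elim => [|a s IH] [x]; first by [].
rewrite inE; case: (boolP [exists y, (y \in s) && P y]) => [/existsP ex|nex].
  have [z [Pz hz]] := IH ex.
  case: (boolP (P a)) => Pa.
    case/orP: (le_total' hG (f z) (f a)) => hza.
      exists z; split => // y; rewrite inE => /orP[/eqP->//|]; exact: hz.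
    exists a; split => // y; rewrite inE => /orP[/eqP->//|ys Py].
    exact: le_trans hza (hz y ys Py).
  exists z; split => // y; rewrite inE => /orP[/eqP->|]; first by rewrite (negbTE Pa).
  exact: hz.
move=> hx; have Pa : P a.
  case/andP: hx => /orP[/eqP<-//|xs Px].
  by move: nex; rewrite negb_exists => /forallP /(_ x); rewrite xs Px.
exists a; split => // y; rewrite inE => /orP[/eqP->|ys Py]; first by rewrite lexx.
by move: nex; rewrite negb_exists => /forallP /(_ y); rewrite ys Py.
Qed.
End MxVal.


Section Main.
Variables (K : fieldType) (G : porderZmodType) (v : K -> G)
  (hG : totally_ordered_group G) (hv : surj_valuation v)
  (hF : residue_formally_real v)
  (H : falgType K) (tau : H -> K) (htau : symm_trace_form tau)
  (star : H -> H) (hstar : involutive_antiaut star)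
  (L : finType) (n : L -> nat) (r : forall l : L, H -> 'M[K]_(n l))
  (hr : split_semisimple r)
  (c : L -> K) (hc : schur_elements r tau c)
  (l : L) (d : nat) (rho : H -> 'M[K]_d) (hrho : irr_rep_of_type r l rho).

Lemma extend_rel (B : seq H) (hB : star_sym_basis tau star B) (Om : 'M[K]_d) :
  (forall x, x \in B -> Om *m rho x = (rho (star x))^T *m Om) ->
  forall x, Om *m rho x = (rho (star x))^T *m Om.
Proof.
move=> h x; rewrite (basis_expand hB x) (star_sum hstar) !(rho_sum hrho).
rewrite mulmx_sumr linear_sum mulmx_suml; apply: eq_bigr => i _.
by rewrite -scalemxAr h ?mem_nth // linearZ /= -scalemxAl.
Qed.

Lemma d_pos : (0 < d)%N.
Proof.
case: hrho => _ [P [Q [_ QP _]]]; case: hr => hpos _ _ _.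
case: d P Q QP => // P Q QP.
have := congr1 (fun M : 'M[K]_(n l) => M (Ordinal (hpos l)) (Ordinal (hpos l))) QP.
by rewrite flatmx0 mulmx0 !mxE eqxx => /esym/eqP; rewrite oner_eq0.
Qed.

Lemma cl0 : c l != 0. Proof. by case: hc. Qed.

Lemma schur_entry (X : seq H) (hX : star_sym_basis tau star X) (p q : 'I_d) :
  c l = \sum_(i < size X) rho (star X`_i) q p * rho X`_i p q.
Proof.
have := congr1 (fun M : 'M[K]_d => M p q) (schur htau hr hc hrho hX (delta_mx p q)).
rewrite /= !mxE !eqxx mulr1 => ->; rewrite summxE; apply: eq_bigr => i _.
by rewrite mxE tr_delta_mul.
Qed.

Lemma entry_bounds (X : seq H) (hX : star_sym_basis tau star X) :
  exists i0 : 'I_(size X), exists p0 q0,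
    rho X`_i0 p0 q0 != 0 /\
    forall b, b \in X -> forall p q, vge v (rho b p q) (v (rho X`_i0 p0 q0)).
Proof.
pose P := fun t : 'I_(size X) * 'I_d * 'I_d => rho X`_(t.1.1) t.1.2 t.2 != 0.
pose f := fun t : 'I_(size X) * 'I_d * 'I_d => v (rho X`_(t.1.1) t.1.2 t.2).
have ex : exists t, P t.
  case: (boolP [exists t, P t]) => [/existsP//|]; rewrite negb_exists => /forallP hn.
  have z : forall i : 'I_(size X), rho X`_i = 0.
    move=> i; apply/matrixP => p q; rewrite mxE.
    by have := hn (i, p, q); rewrite /P /= negbK => /eqP.
  have := congr1 (fun M : 'M[K]_d => M (Ordinal d_pos) (Ordinal d_pos))
    (schur htau hr hc hrho hX 1%:M).
  rewrite big1 => [|i _]; last by rewrite z scaler0.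
  by rewrite !mxE eqxx mulr1 => /eqP; rewrite (negbTE cl0).
have [[[i0 p0] q0] [Pt ht]] := exists_min hG f ex.
exists i0, p0, q0; split => // b bX p q.
have ib : (index b X < size X)%N by rewrite index_mem.
have bE : b = X`_(Ordinal ib) by rewrite /= nth_index.
case: (eqVneq (rho b p q) 0) => [->|nz]; first exact: vge0.
rewrite /vge (negbTE nz) /=.
have := ht (Ordinal ib, p, q); rewrite /P /f /= -bE; apply; exact: nz.
Qed.

Lemma star_mem (X : seq H) (hX : star_sym_basis tau star X) b :
  b \in X -> star b \in X.
Proof. by case: hX => _ h _; rewrite h. Qed.

Lemma lower (X : seq H) (hX : star_sym_basis tau star X) (m : G) :
  (forall b, b \in X -> forall p q, vge v (rho b p q) m) -> m + m <= v (c l).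
Proof.
move=> hm; have p : 'I_d := Ordinal d_pos.
have : vge v (c l) (m + m).
  rewrite (schur_entry hX p p); apply: (vge_sum hv) => // i _; apply: (vgeM hG hv) => //.
    by apply: hm; apply: star_mem => //; apply: mem_nth.
  by apply: hm; apply: mem_nth.
by rewrite /vge (negbTE cl0).
Qed.

Lemma offdiag (Om : 'M[K]_d) (hOm : forall x, Om *m rho x = (rho (star x))^T *m Om)
  (hoff : forall i j, i != j -> inm v (Om i j)) (g : G) (b : H)
  (hb : forall i j, vge v (rho b i j) g) (hb' : forall i j, vge v (rho (star b) i j) g)
  (p q : 'I_d) :
  vgt v (Om p p * rho b p q - rho (star b) q p * Om q q) g.
Proof.
have e : \sum_k Om p k * rho b k q = \sum_k rho (star b) k p * Om k q.
  have := congr1 (fun M : 'M[K]_d => M p q) (hOm b); rewrite /= !mxE => ->.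
  by apply: eq_bigr => k _; rewrite mxE.
have h1 : Om p p * rho b p q = \sum_k Om p k * rho b k q
    - \sum_(k | k != p) Om p k * rho b k q by rewrite (bigD1 p) //= addrK.
have h2 : rho (star b) q p * Om q q = \sum_k rho (star b) k p * Om k q
    - \sum_(k | k != q) rho (star b) k p * Om k q by rewrite (bigD1 q) //= addrK.
rewrite h1 h2 e opprB addrC addrA subrK. apply: (vgtB hG hv) => //.
  apply: (vgt_sum hv) => k kq; rewrite mulrC -(add0r g).
  by apply: (vgtM hG hv); [apply: hoff | apply: hb'].
apply: (vgt_sum hv) => k kp; rewrite -(add0r g).
by apply: (vgtM hG hv); [apply: hoff; rewrite eq_sym | apply: hb].
Qed.

Lemma sos k (i0 : 'I_k) (y : 'I_k -> K) : (forall i, inO v (y i)) -> y i0 = 1 ->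
  ~~ inm v (\sum_i y i ^+ 2).
Proof.
move=> hy yi0.
have := hF (k := k) (x := fun i => if i == i0 then 0 else y i).
have -> : \sum_i y i ^+ 2 = 1 + \sum_i (if i == i0 then 0 else y i) ^+ 2.
  rewrite (bigD1 i0) //= yi0 expr1n; congr (_ + _).
  rewrite [RHS](bigD1 i0) //= eqxx expr2 mul0r add0r.
  by apply: eq_bigr => i ii0; rewrite (negbTE ii0).
apply => i; case: (i == i0) => //; exact: vge0.
Qed.

Lemma unit_notm x : x != 0 -> v x = 0 -> ~~ inm v x /\ inO v x.
Proof. by move=> x0 vx; rewrite /inm /inO /vge (negbTE x0) vx ltxx lexx. Qed.

Lemma core_a (Om : 'M[K]_d) (hOm : forall x, Om *m rho x = (rho (star x))^T *m Om)
  (hoff : forall i j, i != j -> inm v (Om i j)) (hdiag : forall i, inOunit v (Om i i))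
  (X : seq H) (hX : star_sym_basis tau star X) :
  exists m, v (c l) = m + m /\ forall b, b \in X -> forall p q, vge v (rho b p q) m.
Proof.
have [i0 [p0 [q0 [nz hm]]]] := entry_bounds hX.
set pi := rho X`_i0 p0 q0 in nz hm; set m := v pi in hm.
exists m; split => //.
have hbX : forall (i : 'I_(size X)) p q, vge v (rho X`_i p q) m.
  by move=> i; apply: hm; apply: mem_nth.
have hbX' : forall (i : 'I_(size X)) p q, vge v (rho (star X`_i) p q) m.
  by move=> i; apply: hm; apply: star_mem => //; apply: mem_nth.
pose pii := pi^-1.
have pii0 : pii != 0 by rewrite invr_eq0.
have vpii : v pii = - m by rewrite vV.
have hpii : vge v pii (- m) by rewrite -vpii vge_val.
pose y := fun i : 'I_(size X) => rho X`_i p0 q0 * pii.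
have hy : forall i, inO v (y i).
  by move=> i; rewrite /inO -(subrr m); apply: (vgeM hG hv).
have yi0 : y i0 = 1 by rewrite /y mulfV.
have hs := sos hy yi0.
set s := \sum_i y i ^+ 2 in hs.
have hsO : inO v s.
  rewrite /inO /s; apply: (vge_sum hv) => i _; rewrite expr2 -(add0r 0).
  exact: (vgeM hG hv (hy i) (hy i)).
have [s0 vs0] := unitO hG hsO hs.
pose D := fun i : 'I_(size X) =>
  Om p0 p0 * rho X`_i p0 q0 - rho (star X`_i) q0 p0 * Om q0 q0.
have hD : forall i, vgt v (D i) m.
  by move=> i; apply: (offdiag hOm hoff (hbX i) (hbX' i)).
have key : Om q0 q0 * c l * (pii * pii) =
    Om p0 p0 * s - \sum_i (D i * pii) * y i.
  rewrite (schur_entry hX p0 q0) mulr_sumr mulr_suml /s mulr_sumr -sumrB.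
  by apply: eq_bigr => i _; rewrite /D /y; ring.
case/andP: (hdiag p0) => u0 /eqP vu.
case/andP: (hdiag q0) => w0 /eqP vw.
have [hun huO] : ~~ inm v (Om p0 p0 * s) /\ inO v (Om p0 p0 * s).
  by apply: unit_notm; [rewrite mulf_neq0 | rewrite vM // vu vs0 addr0].
have he : inm v (\sum_i (D i * pii) * y i).
  apply: (vgt_sum hv) => i _.
  have h := vgtM hG hv (vgtM hG hv (hD i) hpii) (hy i).
  by rewrite subrr addr0 in h.
have hSm : ~~ inm v (Om q0 q0 * c l * (pii * pii)).
  by rewrite key; apply: notm_add => //; apply: vgtN.
have hSO : inO v (Om q0 q0 * c l * (pii * pii)).
  by rewrite key; apply: (vgeB hG hv) => //; apply: vgt_vge.
have [_ vS] := unitO hG hSO hSm.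
move: vS; rewrite !vM ?mulf_neq0 ?cl0 // vw vpii add0r -opprD.
by move/eqP; rewrite subr_eq0 => /eqP.
Qed.

Lemma core_b (Om : 'M[K]_d) (hOm : forall x, Om *m rho x = (rho (star x))^T *m Om)
  (hsym : Om^T = Om) (hO : forall i j, inO v (Om i j)) (hdet : inOunit v (\det Om))
  (X : seq H) (hX : star_sym_basis tau star X) :
  exists m, v (c l) = m + m /\ forall b, b \in X -> forall p q, vge v (rho b p q) m.
Proof.
have [i0 [p0 [q0 [nz hm]]]] := entry_bounds hX.
set pi := rho X`_i0 p0 q0 in nz hm; set m := v pi in hm.
exists m; split => //.
have Ou : Om \in unitmx.
  by rewrite unitmxE unitfE; case/andP: hdet.
pose Oi := invmx Om.
have rel : forall x, rho (star x) = Oi *m ((rho x)^T *m Om).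
  move=> x; have := congr1 trmx (hOm x); rewrite !trmx_mul trmxK hsym => e.
  by rewrite e mulKmx.
pose M := Oi *m delta_mx p0 q0 *m Om.
have htr : forall i : 'I_(size X), \tr (M *m rho (star X`_i)) = rho X`_i p0 q0.
  move=> i; rewrite rel /M -!mulmxA (mulmxA Om Oi) mulmxV // mul1mx.
  rewrite mxtrace_mulC -!mulmxA mulmxV // mulmx1 tr_delta_mul mxE //.
have e := congr1 (fun A : 'M[K]_d => A p0 q0) (schur htau hr hc hrho hX M).
rewrite /= mxE /M delta_entry summxE in e.
have e2 : c l * (Oi p0 p0 * Om q0 q0) = \sum_(i < size X) rho X`_i p0 q0 * rho X`_i p0 q0.
  by rewrite e; apply: eq_bigr => i _; rewrite mxE htr.
pose pii := pi^-1.
have pii0 : pii != 0 by rewrite invr_eq0.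
have vpii : v pii = - m by rewrite vV.
have hpii : vge v pii (- m) by rewrite -vpii vge_val.
pose y := fun i : 'I_(size X) => rho X`_i p0 q0 * pii.
have hy : forall i, inO v (y i).
  by move=> i; rewrite /inO -(subrr m); apply: (vgeM hG hv); [apply: hm; apply: mem_nth|].
have yi0 : y i0 = 1 by rewrite /y mulfV.
have hs := sos hy yi0.
set s := \sum_i y i ^+ 2 in hs.
have hsO : inO v s.
  rewrite /inO /s; apply: (vge_sum hv) => i _; rewrite expr2 -(add0r 0).
  exact: (vgeM hG hv (hy i) (hy i)).
have [s0 vs0] := unitO hG hsO hs.
have e3 : c l * (Oi p0 p0 * Om q0 q0) = (pi * pi) * s.
  rewrite e2 /s mulr_sumr; apply: eq_bigr => i _; rewrite /y /pii.
  by field.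
set w := Oi p0 p0 * Om q0 q0 in e3.
have hw : inO v w.
  rewrite /inO /w -(add0r 0); apply: (vgeM hG hv); last exact: hO.
  exact: (inv_inO hG hv hO hdet).
have w0 : w != 0.
  apply: contraTneq (erefl true) => w0; move: e3; rewrite w0 mulr0 => /esym/eqP.
  by rewrite !mulf_eq0 (negbTE nz) (negbTE s0).
have vcw : v (c l) + v w = m + m.
  by rewrite -vM ?cl0 // e3 vM ?mulf_neq0 // vs0 addr0 vM.
apply: le_anti; rewrite (lower hX hm) andbT.
rewrite -vcw -{1}(addr0 (v (c l))); apply: (leD2 hG) => //.
by move: hw; rewrite /inO /vge (negbTE w0).
Qed.
End Main.

Unset Implicit Arguments.

Theorem mainTheorem4
  (K : fieldType) (G : porderZmodType) (v : K -> G)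
  (hG : totally_ordered_group G) (hv : surj_valuation v)
  (hF : residue_formally_real v)
  (H : falgType K) (tau : H -> K) (htau : symm_trace_form tau)
  (star : H -> H) (hstar : involutive_antiaut star)
  (L : finType) (n : L -> nat) (r : forall l : L, H -> 'M[K]_(n l))
  (hr : split_semisimple r)
  (c : L -> K) (hc : schur_elements r tau c)
  (B : seq H) (hB : star_sym_basis tau star B)
  (l : L) (d : nat) (rho : H -> 'M[K]_d) (hrho : irr_rep_of_type r l rho) :
  (* (a) *)
  (forall Om : 'M[K]_d,
     (forall i j, inO v (Om i j)) ->
     (forall i j, i != j -> inm v (Om i j)) ->
     (forall i, inOunit v (Om i i)) ->
     (forall x, x \in B -> Om *m rho x = (rho (star x))^T *m Om) ->
     balanced v tau star (c l) rho /\
     (forall (a : G) (w : K), v (c l) = - (a *+ 2) -> w != 0 -> v w = a ->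
        forall x, x \in B -> forall s t : 'I_d,
          inm v (Om t t * (w * rho (star x) t s) - Om s s * (w * rho x s t))))
  /\
  (* (b) *)
  (forall Om : 'M[K]_d,
     Om^T = Om ->
     (forall i j, inO v (Om i j)) ->
     inOunit v (\det Om) ->
     (forall x, x \in B -> Om *m rho x = (rho (star x))^T *m Om) ->
     balanced v tau star (c l) rho).
Proof.
have bal : forall Om : 'M[K]_d,
  (forall X, star_sym_basis tau star X -> exists m, v (c l) = m + m /\
     forall b, b \in X -> forall p q, vge v (rho b p q) m) ->
  balanced v tau star (c l) rho /\ exists m, v (c l) = m + m /\
     forall b, b \in B -> forall p q, vge v (rho b p q) m.
  move=> _ hX; have [m [vc hm]] := hX B hB; split; last by exists m.
  exists (- m); split; first by rewrite mulr2n opprD !opprK.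
  move=> B' hB' b bB' i j; have [m' [vc' hm']] := hX B' hB'.
  have mm : m' = m by apply: (gdouble_inj hG); rewrite -vc -vc'.
  by rewrite opprK -mm; apply: hm'.
split.
  move=> Om hO hoff hdiag hOmB.
  have hOm := extend_rel hstar hrho hB hOmB.
  have [hbal [m [vc hm]]] := bal Om (core_a hG hv hF htau hr hc hrho hOm hoff hdiag).
  split => // a w hva w0 vw x xB s t.
  have am : a = - m.
    apply: oppr_inj; rewrite opprK; apply: (gdouble_inj hG).
    by rewrite -opprD -mulr2n -hva vc.
  have hD := offdiag hG hv hOm hoff (hm x xB) (hm _ (star_mem hB xB)) s t.
  have hw : vge v w (- m) by rewrite /vge (negbTE w0) vw am lexx orbT.
  have -> : Om t t * (w * rho (star x) t s) - Om s s * (w * rho x s t) =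
    - ((Om s s * rho x s t - rho (star x) t s * Om t t) * w) by ring.
  apply: (vgtN hG hv); have h := vgtM hG hv hD hw; by rewrite subrr in h.
move=> Om hsym hO hdet hOmB.
have hOm := extend_rel hstar hrho hB hOmB.
by have [hbal _] := bal Om (core_b hG hv hF htau hr hc hrho hOm hsym hO hdet).
Qed.
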